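(* Let $a,d,k,c$ be positive integers such that $\gcd(a,a+d,\ldots,a+kd,c)=1$, and let $\mathcal{S}=\langle a,a+d,a+2d,\ldots,a+kd,c\rangle$. Then $\mathrm{type}(\mathcal{S})\le 2k$.
   Context: $\langle b_1,\ldots,b_t\rangle$ denotes the numerical semigroup of all non-negative integer linear combinations of $b_1,\ldots,b_t$ (such semigroups with generators $a,a+d,\ldots,a+kd,c$ are called AA-semigroups). A pseudo-Frobenius number of a numerical semigroup $\mathcal{S}$ is an integer $x\notin\mathcal{S}$ with $x+s\in\mathcal{S}$ for every nonzero $s\in\mathcal{S}$; $\mathrm{type}(\mathcal{S})$ is the number of pseudo-Frobenius numbers. *)

(* Defs.v *)
From HB Require Import structures.
From mathcomp Require Import all_boot all_order all_algebra.
Set Implicit Arguments. Unset Strict Implicit. Unset Printing Implicit Defensive.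
Import GRing.Theory Num.Theory.

Definition in_sg (g : seq nat) (n : nat) : Prop :=
  exists cs : seq nat, size cs = size g /\
    n = sumn [seq p.1 * p.2 | p <- zip cs g].

Definition in_sgZ (g : seq nat) (x : int) : Prop :=
  exists n : nat, x = Posz n /\ in_sg g n.

Definition gcd_seq (g : seq nat) : nat := foldr gcdn 0%N g.

Definition pseudo_frobenius (g : seq nat) (x : int) : Prop :=
  ~ in_sgZ g x /\
  forall s : nat, (0 < s)%N -> in_sg g s -> in_sgZ g (x + Posz s)%R.

Definition AA_gens (a d k c : nat) : seq nat :=
  [seq a + i * d | i <- iota 0 k.+1] ++ [:: c].

(* Main.v *)
Require Import Defs.
From HB Require Import structures.
From mathcomp Require Import all_boot all_order all_algebra zify.
From Stdlib Require Import Classical IndefiniteDescription.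
Set Implicit Arguments. Unset Strict Implicit. Unset Printing Implicit Defensive.
Import GRing.Theory Num.Theory Order.TTheory.

Lemma in_sg_nil n : in_sg [::] n <-> n = 0.
Proof.
split.
- by case=> [[|? ?] [//= _ ->]].
- move=> ->; by exists [::].
Qed.

Lemma in_sg_cons x g n : in_sg (x :: g) n <-> exists c0 m, in_sg g m /\ n = c0 * x + m.
Proof.
split.
- case=> [[|c0 cs] [//= [Hs] ->]]. exists c0, (sumn [seq p.1 * p.2 | p <- zip cs g]).
  by split=> //; exists cs.
- case=> [c0 [m [[cs [Hs ->]] ->]]]. by exists (c0 :: cs); rewrite /= Hs.
Qed.

Definition G a d c s m := [seq a + i * d | i <- iota s m] ++ [:: c].

Lemma GS a d c s m : G a d c s m.+1 = (a + s * d) :: G a d c s.+1 m.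
Proof. by []. Qed.

Lemma F1 a d c m : forall s n, in_sg (G a d c s m) n ->
  exists nn j t, s * nn <= j /\ j + nn <= (s + m) * nn /\ n = nn * a + j * d + t * c.
Proof.
elim: m => [|m IH] s n.
- rewrite /G /= in_sg_cons => [[c0 [m' [/in_sg_nil -> ->]]]].
  exists 0, 0, c0; rewrite addn0; lia.
- rewrite GS in_sg_cons => [[c0 [m' [/IH [nn [j [t [H1 [H2 ->]]]]] ->]]]].
  exists (c0 + nn), (s * c0 + j), t; nia.
Qed.

Lemma F2 a d c m : forall s nn j t, s * nn <= j -> j + nn <= (s + m) * nn ->
  in_sg (G a d c s m) (nn * a + j * d + t * c).
Proof.
elim: m => [|m IH] s nn j t H1 H2.
- have -> : nn = 0 by nia.
  have -> : j = 0 by nia.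
  rewrite /G /= in_sg_cons; exists t, 0; split; first by apply/in_sg_nil.
  lia.
- rewrite GS in_sg_cons.
  have He : s * nn <= j by [].
  pose e := j - s * nn.
  have [Hle|Hlt] := leqP nn e.
  + exists 0, (nn * a + j * d + t * c); split.
    * apply: IH; rewrite /e in Hle; nia.
    * nia.
  + exists (nn - e), (e * a + (j - s * (nn - e)) * d + t * c); split.
    * have He2 : e <= m * nn by rewrite /e; nia.
      have Hm : e <= m * e by case: m {IH H2} He2 => [|m] He2; nia.
      apply: IH; rewrite /e in Hlt Hm *; nia.
    * rewrite /e in Hlt *; nia.
Qed.

Lemma AA_dec a d k c n : in_sg (AA_gens a d k c) n ->
  exists nn j t, (j <= k * nn)%N /\ n = (nn * a + j * d + t * c)%N.
Proof.
move=> H; have := @F1 a d c k.+1 0 n H => [[nn [j [t [H1 [H2 ->]]]]]].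
by exists nn, j, t; split => //; nia.
Qed.

Lemma AA_mem a d k c nn j t : (j <= k * nn)%N ->
  in_sg (AA_gens a d k c) (nn * a + j * d + t * c)%N.
Proof. move=> H; apply: (@F2 a d c k.+1 0); nia. Qed.

Lemma int_nat (z : int) : (0 <= z)%R -> exists n : nat, z = Posz n.
Proof. by case: z => // n _; exists n. Qed.


Lemma nat_min (Q : nat -> Prop) n : Q n -> exists m, Q m /\ forall p, Q p -> (m <= p)%N.
Proof.
elim/ltn_ind: n => n IH Hn.
case: (classic (exists p, (p < n)%N /\ Q p)) => [[p [Hp HQ]]|H].
- exact: IH Hp HQ.
- exists n; split => // p Hp; rewrite leqNgt; apply/negP => Hlt; apply: H; by exists p.
Qed.

Local Open Scope ring_scope.

Lemma int_min (Q : int -> Prop) (lb : int) : (forall x, Q x -> lb <= x) ->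
  (exists x, Q x) -> exists x, Q x /\ forall y, Q y -> x <= y.
Proof.
move=> Hlb [x Hx].
have Hx' : Q (lb + Posz `|x - lb|%N) by have := Hlb _ Hx; move=> H; have -> : lb + Posz `|x - lb|%N = x by lia.
have [m [Hm Hmin]] := @nat_min (fun n : nat => Q (lb + Posz n)) _ Hx'.
exists (lb + Posz m); split => // y Hy.
have Hyl := Hlb _ Hy.
have : lb + Posz `|y - lb|%N = y by lia.
move=> Heq. have := Hmin `|y - lb|%N; rewrite Heq => /(_ Hy). lia.
Qed.

Section Abs.
Definition Bset (P : int -> int -> Prop) (x y : int) :=
  exists m1 m2, P m1 m2 /\ m1 <= x /\ m2 <= y.

Definition maxpt (k : int) (P : int -> int -> Prop) (x y : int) :=
  [/\ 0 <= x, 0 <= y, (exists n, x + y = k * n), ~ Bset P x y &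
      forall i, 0 <= i <= k -> Bset P (x + i) (y + k - i)].
End Abs.

Lemma abstract_count (k : int) (P : int -> int -> Prop) :
  0 < k ->
  (forall x y x' y', P x y -> P x' y' -> ~ (x = x' /\ y = y') ->
     P (x' - x) (y' - y) \/ P (x - x') (y - y')) ->
  (forall x y, P x y -> 0 < x \/ 0 < y) ->
  (exists x y, P x y /\ y <= 0) ->
  (exists x y, P x y /\ x <= 0) ->
  exists code : int -> int -> int,
    (forall x y, maxpt k P x y -> 0 <= code x y < 2 * k) /\
    (forall x y x' y', maxpt k P x y -> maxpt k P x' y' -> code x y = code x' y' ->
       x = x' /\ y = y').
Proof.
move=> Hk Htri Hpos HX HY.
have [X [[yX [PX yX0]] Xmin]] : exists X, (exists y, P X y /\ y <= 0) /\
    forall x, (exists y, P x y /\ y <= 0) -> X <= x.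
  apply: (@int_min _ 0) => [x [y [Pxy Hy]]|]; last by case: HX => x [y H]; exists x, y.
  by case: (Hpos _ _ Pxy) => H; lia.
have [Y [[xY [PY xY0]] Ymin]] : exists Y, (exists x, P x Y /\ x <= 0) /\
    forall y, (exists x, P x y /\ x <= 0) -> Y <= y.
  apply: (@int_min _ 0) => [y [x [Pxy Hx]]|]; last by case: HY => x [y H]; exists y, x.
  by case: (Hpos _ _ Pxy) => H; lia.
have X0 : 0 < X by case: (Hpos _ _ PX) => H; lia.
have Y0 : 0 < Y by case: (Hpos _ _ PY) => H; lia.
have Hbnd : forall x y, 0 <= x -> 0 <= y -> ~ Bset P x y -> x < X /\ y < Y.
  move=> x y Hx Hy HB; split; rewrite ltNge; apply/negP => H; apply: HB.
  - by exists X, yX; split => //; lia.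
  - by exists xY, Y; split => //; lia.
have [I1 [I2 [HI1 [HI2 [HI10 [HnB HB]]]]]] : exists I1 I2, I1 <= X /\ I2 <= Y /\ 0 < I1 /\
   (forall x y, 0 <= x -> 0 <= y -> ~ Bset P x y -> x < I1 \/ y < I2) /\
   (forall x y, Bset P x y -> X <= x \/ Y <= y \/ (I1 <= x /\ I2 <= y)).
  case: (classic (exists x y, P x y /\ 0 < x < X /\ 0 < y < Y)) => [Hint|Hno].
  - have [I1 [[I2 [PI [HIx HIy]]] Imin]] : exists I1, (exists y, P I1 y /\ 0 < I1 < X /\ 0 < y < Y)
        /\ forall x, (exists y, P x y /\ 0 < x < X /\ 0 < y < Y) -> I1 <= x.
      apply: (@int_min _ 0) => [x [y [_ [H _]]]|]; first by lia.
      by case: Hint => x [y H]; exists x, y.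
    exists I1, I2; split; first by lia. split; first by lia. split; first by lia.
    split.
    + move=> x y Hx Hy HnB.
      case: (ltrP x I1) => h; first by left.
      case: (ltrP y I2) => h'; first by right.
      exfalso; apply: HnB; exists I1, I2; split => //.
    + move=> x y [m1 [m2 [Pm [H1 H2]]]].
      case: (lerP m2 0) => Hm2; first by left; have := Xmin m1 (ex_intro _ m2 (conj Pm Hm2)); lia.
      case: (lerP m1 0) => Hm1; first by right; left; have := Ymin m2 (ex_intro _ m1 (conj Pm Hm1)); lia.
      case: (lerP X m1) => HXm; first by left; lia.
      case: (lerP Y m2) => HYm; first by right; left; lia.
      have Hle1 : I1 <= m1 by apply: Imin; exists m2; split => //; lia.
      right; right; split; first by lia.
      case: (lerP I2 m2) => HI2m; first by lia.
      exfalso.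
      have Hne : ~ (I1 = m1 /\ I2 = m2) by lia.
      case: (Htri _ _ _ _ PI Pm Hne) => H.
      * have H' : m2 - I2 <= 0 by lia.
        have := Xmin (m1 - I1) (ex_intro _ (m2 - I2) (conj H H')). lia.
      * have H' : I1 - m1 <= 0 by lia.
        have := Ymin (I2 - m2) (ex_intro _ (I1 - m1) (conj H H')). lia.
  - exists X, Y; split; first by lia. split; first by lia. split; first by lia.
    split.
    + by move=> x y Hx Hy HnB; left; case: (Hbnd _ _ Hx Hy HnB).
    + move=> x y [m1 [m2 [Pm [H1 H2]]]].
      case: (lerP m2 0) => Hm2; first by left; have := Xmin m1 (ex_intro _ m2 (conj Pm Hm2)); lia.
      case: (lerP m1 0) => Hm1; first by right; left; have := Ymin m2 (ex_intro _ m1 (conj Pm Hm1)); lia.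
      case: (lerP X m1) => HXm; first by left; lia.
      case: (lerP Y m2) => HYm; first by right; left; lia.
      exfalso; apply: Hno; exists m1, m2; split => //; lia.
have Hcls : forall x y, maxpt k P x y ->
   (x < I1 /\ 0 <= I1 - 1 - x <= k - 1 /\ Y <= y + k - (I1 - 1 - x) /\ y < Y) \/
   (I1 <= x /\ 0 <= I2 - 1 - y <= k - 1 /\ X <= x + k - (I2 - 1 - y) /\ x < X).
  move=> x y [Hx Hy Hn HnBz Hall].
  have [HxX HyY] := Hbnd _ _ Hx Hy HnBz.
  case: (ltrP x I1) => Hc.
  - left.
    have h1 := HB _ _ (Hall k ltac:(lia)).
    have Hk1 : I1 <= x + k by lia.
    have h2 := HB _ _ (Hall (I1 - 1 - x) ltac:(lia)).
    lia.
  - right.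
    have Hy2 : y < I2 by case: (HnB _ _ Hx Hy HnBz) => H; lia.
    have h1 := HB _ _ (Hall 0 ltac:(lia)).
    have Hk1 : I2 <= y + k by lia.
    have h2 := HB _ _ (Hall (k - (I2 - 1 - y)) ltac:(lia)).
    lia.
exists (fun x y => if x < I1 then I1 - 1 - x else k + I2 - 1 - y); split.
- move=> x y Hm; case: (Hcls _ _ Hm) => [[Hc H]|[Hc H]].
  + by rewrite Hc; lia.
  + by rewrite ltNge Hc /=; lia.
- move=> x y x' y' Hm Hm'.
  have [_ _ [n Hn] _ _] := Hm.
  have [_ _ [n' Hn'] _ _] := Hm'.
  case: (Hcls _ _ Hm) => [[Hc H]|[Hc H]]; case: (Hcls _ _ Hm') => [[Hc' H']|[Hc' H']];
    rewrite ?Hc ?Hc' ?(ltNge x I1) ?(ltNge x' I1) ?Hc ?Hc' /= => Heq; try lia.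
  + have Hxx : x = x' by lia.
    subst x'.
    have Hnn : n = n' by nia.
    subst n'; lia.
  + have Hyy : y = y' by lia.
    subst y'.
    have Hnn : n = n' by nia.
    subst n'; lia.
Qed.



Theorem theorem3 (a d k c : nat) :
  (0 < a)%N -> (0 < d)%N -> (0 < k)%N -> (0 < c)%N ->
  gcd_seq (AA_gens a d k c) = 1%N ->
  forall l : seq int, uniq l ->
    (forall x, x \in l -> pseudo_frobenius (AA_gens a d k c) x) ->
    (size l <= 2 * k)%N.
Proof.
move=> Ha Hd Hk Hc _ l Hu Hpf.
pose P (x y : int) := exists np t : int, x + y = Posz k * np /\
   Posz a * np + Posz d * x = Posz c * t /\ (0 < t \/ (t = 0 /\ 0 < x)).
have [code [Hcb Hci]] : exists code : int -> int -> int,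
    (forall x y, maxpt (Posz k) P x y -> 0 <= code x y < 2 * Posz k) /\
    (forall x y x' y', maxpt (Posz k) P x y -> maxpt (Posz k) P x' y' -> code x y = code x' y' ->
       x = x' /\ y = y').
  apply: abstract_count.
  - lia.
  - move=> x y x' y' [np [t [E1 [E2 E3]]]] [np' [t' [E1' [E2' E3']]]] Hne.
    case: (ltrgtP t t') => Ht.
    + left; exists (np' - np), (t' - t); split; first lia. split; first lia. left; lia.
    + right; exists (np - np'), (t - t'); split; first lia. split; first lia. left; lia.
    + case: (ltrgtP x x') => Hx.
      * left; exists (np' - np), (t' - t); split; first lia. split; first lia. right; lia.
      * right; exists (np - np'), (t - t'); split; first lia. split; first lia. right; lia.
      * exfalso; apply: Hne; subst t' x'.
        have : np = np' by nia.
        move=> ?; subst np'; split => //; lia.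
  - move=> x y [np [t [E1 [E2 E3]]]].
    case: (ltrP 0 x) => hx; first by left.
    right; case: (ltrP 0 y) => // hy; exfalso.
    have np0 : np <= 0 by nia.
    case: E3 => [Ht|[Ht Hx]]; nia.
  - exists (Posz k * Posz c), 0; split; last lia.
    exists (Posz c), (Posz a + Posz d * Posz k); split; first lia. split; first lia.
    left; nia.
  - exists 0, (Posz k * Posz c); split; last lia.
    exists (Posz c), (Posz a); split; first lia. split; first lia.
    left; lia.
have Hcm : in_sg (AA_gens a d k c) c.
  by have := @AA_mem a d k c 0 0 1 (leq0n _); rewrite !mul0n mul1n !add0n.
have Hex : forall f, f \in l -> exists x y nn : int, maxpt (Posz k) P x y /\
    f + Posz c = Posz a * nn + Posz d * x /\ x + y = Posz k * nn.
  move=> f /Hpf [HnS Hs].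
  have [N [HN HSN]] := Hs c Hc Hcm.
  have [nn1 [j1 [t1 [Hj1 EN]]]] := AA_dec HSN.
  have Ht1 : t1 = 0%N.
    case: t1 EN => // t1 EN; exfalso; apply: HnS.
    exists (nn1 * a + j1 * d + t1 * c)%N; split; last exact: AA_mem.
    lia.
  subst t1.
  have EN1 : N = (nn1 * a + j1 * d)%N by rewrite EN mul0n addn0.
  have [j0 [[nn0 [Hj0 EN0]] Hmin]] :=
    @nat_min (fun j => exists nn, (j <= k * nn)%N /\ N = (nn * a + j * d)%N) j1
      (ex_intro _ nn1 (conj Hj1 EN1)).
  exists (Posz j0), (Posz k * Posz nn0 - Posz j0), (Posz nn0); split; last by split; lia.
  split.
  - lia.
  - lia.
  - by exists (Posz nn0); lia.
  - move=> [m1 [m2 [[np [t [E1 [E2 E3]]]] [H1 H2]]]].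
    have [p2 Ep2] := int_nat (z := Posz j0 - m1) ltac:(lia).
    have Em1 : m1 = Posz j0 - Posz p2 by lia.
    subst m1.
    have Hnn : 0 <= Posz nn0 - np by nia.
    have [p1 Ep1] := int_nat Hnn.
    have Enp : np = Posz nn0 - Posz p1 by lia.
    subst np.
    have Hp : (p2 <= k * p1)%N by nia.
    case: E3 => [Ht|[Ht Hm]].
    + have [p3 Ep3] := int_nat (z := t - 1) ltac:(lia).
      have Et : t = Posz p3 + 1 by lia.
      subst t.
      apply: HnS; exists (p1 * a + p2 * d + p3 * c)%N; split; last exact: AA_mem.
      nia.
    + subst t.
      have EN3 : N = (p1 * a + p2 * d)%N by nia.
      have := Hmin p2 (ex_intro _ p1 (conj Hp EN3)).
      lia.
  - move=> i Hi.
    have [i' Ei] := int_nat (z := i) ltac:(lia).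
    subst i.
    have Hgi : in_sg (AA_gens a d k c) (a + i' * d)%N.
      by have := @AA_mem a d k c 1 i' 0 ltac:(lia); rewrite mul1n mul0n addn0.
    have [N2 [HN2 HS2]] := Hs (a + i' * d)%N ltac:(lia) Hgi.
    have [nn2 [j2 [t2 [Hj2 EN2]]]] := AA_dec HS2.
    exists (Posz j0 + Posz i' - Posz j2),
      (Posz k * Posz nn0 - Posz j0 + Posz k - Posz i' - (Posz k * Posz nn2 - Posz j2)).
    split; last by split; lia.
    exists (Posz nn0 + 1 - Posz nn2), (Posz t2 + 1); split; first lia.
    split; last by left; lia.
    lia.
have Hch : forall f, exists cd : nat, f \in l -> (cd < 2 * k)%N /\
    exists x y nn : int, [/\ maxpt (Posz k) P x y, f + Posz c = Posz a * nn + Posz d * x,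
      x + y = Posz k * nn & code x y = Posz cd].
  move=> f; case: (boolP (f \in l)) => Hf; last by exists 0%N.
  have [x [y [nn [Hm [E1 E2]]]]] := Hex f Hf.
  have Hb := Hcb _ _ Hm.
  have [cd Ecd] := int_nat (z := code x y) ltac:(lia).
  exists cd => _; split; first lia.
  by exists x, y, nn; split.
pose cf f := proj1_sig (constructive_indefinite_description _ (Hch f)).
have Hcf : forall f, f \in l -> (cf f < 2 * k)%N /\
    exists x y nn : int, [/\ maxpt (Posz k) P x y, f + Posz c = Posz a * nn + Posz d * x,
      x + y = Posz k * nn & code x y = Posz (cf f)].
  move=> f Hf; exact: (proj2_sig (constructive_indefinite_description _ (Hch f)) Hf).
have Hinj : {in l &, injective cf}.
  move=> f f' Hf Hf' E.
  have [_ [x [y [nn [Hm E1 E2 E3]]]]] := Hcf f Hf.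
  have [_ [x' [y' [nn' [Hm' E1' E2' E3']]]]] := Hcf f' Hf'.
  rewrite -E -E3 in E3'.
  have [Hx Hy] := Hci _ _ _ _ Hm Hm' (esym E3').
  subst x' y'.
  have : nn = nn' by nia.
  move=> ?; subst nn'; lia.
rewrite -(size_map cf) -(size_iota 0 (2 * k)).
apply: uniq_leq_size; first by rewrite map_inj_in_uniq.
move=> v /mapP [f Hf ->]; rewrite mem_iota add0n; exact: (Hcf f Hf).1.
Qed.
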